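(* Let $\delta_j,\delta_k$ be coprime integers with $1<\delta_j<\delta_k$, let $r=\delta_k\bmod\delta_j$ and let $f\colon \mathcal B(\delta_j,r)\to\mathcal B(\delta_k,\delta_j)$, $f(x',y')=(y',\,x'-y'\lfloor \delta_k/\delta_j\rfloor)$. Then the irreducible elements of $\mathcal B(\delta_k,\delta_j)\setminus f(\mathcal B(\delta_j,r))$ are exactly the B\'ezout couples $(1,y)$ with $-\lfloor\delta_k/\delta_j\rfloor<y\le 0$.
   Context: For coprime positive integers $p,q$ and $i\in\{1,\ldots,\max\{p,q\}\}$, the $\lambda$-B\'ezout couple $\boldsymbol\lambda_i$ of $i$ for $(p,q)$ is the unique $(x,y)\in\mathbb Z^2$ with $xp+yq=i$ and $0<y\le p$, and the $\mu$-B\'ezout couple $\boldsymbol\mu_i$ of $i$ for $(p,q)$ is the unique $(x,y)\in\mathbb Z^2$ with $xp+yq=i$ and $0<x\le q$. $\mathcal B(p,q)$ denotes the set of all $\lambda$- and $\mu$-B\'ezout couples for $(p,q)$. $\boldsymbol\lambda_i$ is irreducible if there are no $j,k\in\{1,\ldots,\max\{p,q\}\}$ with $\boldsymbol\lambda_i=\boldsymbol\lambda_j+\boldsymbol\lambda_k$; likewise $\boldsymbol\mu_i$ is irreducible if there are no such $j,k$ with $\boldsymbol\mu_i=\boldsymbol\mu_j+\boldsymbol\mu_k$. *)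

(* Defs.v *)
From Stdlib Require Import ZArith.
Open Scope Z_scope.

Definition is_lambda (p q i : Z) (c : Z * Z) : Prop :=
  fst c * p + snd c * q = i /\ 0 < snd c <= p.

Definition is_mu (p q i : Z) (c : Z * Z) : Prop :=
  fst c * p + snd c * q = i /\ 0 < fst c <= q.

Definition in_range (p q i : Z) : Prop := 1 <= i <= Z.max p q.

Definition bezout_set (p q : Z) (c : Z * Z) : Prop :=
  exists i, in_range p q i /\ (is_lambda p q i c \/ is_mu p q i c).

Definition add_couple (a b : Z * Z) : Z * Z := (fst a + fst b, snd a + snd b).

Definition lambda_irreducible (p q : Z) (c : Z * Z) : Prop :=
  (exists i, in_range p q i /\ is_lambda p q i c) /\
  ~ (exists j k cj ck, in_range p q j /\ in_range p q k /\
       is_lambda p q j cj /\ is_lambda p q k ck /\ c = add_couple cj ck).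

Definition mu_irreducible (p q : Z) (c : Z * Z) : Prop :=
  (exists i, in_range p q i /\ is_mu p q i c) /\
  ~ (exists j k cj ck, in_range p q j /\ in_range p q k /\
       is_mu p q j cj /\ is_mu p q k ck /\ c = add_couple cj ck).

Definition irreducible_elt (p q : Z) (c : Z * Z) : Prop :=
  lambda_irreducible p q c \/ mu_irreducible p q c.

Definition fmap (dj dk : Z) (c : Z * Z) : Z * Z :=
  (snd c, fst c - snd c * (dk / dj)).

(* Main.v *)
Require Import Defs.
From Stdlib Require Import ZArith Lia.
Open Scope Z_scope.

Theorem proposition3p9 (dj dk : Z) :
  1 < dj -> dj < dk -> Z.gcd dj dk = 1 ->
  forall c : Z * Z,
    (bezout_set dk dj c /\ irreducible_elt dk dj c /\
     ~ (exists c', bezout_set dj (dk mod dj) c' /\ fmap dj dk c' = c))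
    <->
    (bezout_set dk dj c /\
     exists y, c = (1, y) /\ - (dk / dj) < y <= 0).
Proof.
  intros Hj Hjk Hg c.
  assert (Hdm : dk = dj * (dk / dj) + dk mod dj) by (apply Z.div_mod; lia).
  assert (Hrb : 0 <= dk mod dj < dj) by (apply Z.mod_pos_bound; lia).
  assert (Hr0 : dk mod dj <> 0).
  { intro H0. pose proof (Z.gcd_mod dk dj ltac:(lia)) as Hgm.
    rewrite H0, Z.gcd_0_l, Hg in Hgm. lia. }
  unfold irreducible_elt, lambda_irreducible, mu_irreducible, bezout_set,
    in_range, is_lambda, is_mu, fmap, add_couple in *.
  rewrite (Z.max_l dk dj) by lia.
  rewrite (Z.max_l dj (dk mod dj)) by lia.
  remember (dk / dj) as a eqn:Ea. remember (dk mod dj) as r eqn:Er. clear Ea Er.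
  assert (Ha : 1 <= a) by nia.
  split.
  - intros [HB [Hirr Hnot]]. split; [exact HB|].
    destruct c as [x y]. simpl in *.
    destruct Hirr as [[[i [Hi Hl]] Hred] | [[i [Hi Hm]] Hred]].
    + destruct Hl as [Hl Hy].
      destruct (Z_le_gt_dec i dj).
      * exfalso; apply Hnot. exists (y + x*a, x).
        assert (Hx : x <= 0) by nia.
        assert (Hz : (y + x*a) * dj = i - x * r) by nia.
        assert (Hz1 : 1 <= y + x*a) by nia.
        assert (Hx2 : 1 - dj <= x) by nia.
        assert (Hz2 : y + x*a <= r) by nia.
        split.
        -- exists i. split; [lia|]. right. simpl. split; [lia|lia].
        -- simpl. f_equal. ring.
      * exfalso; apply Hred. destruct (Z.eq_dec y 1) as [->|Hy1].
        { exfalso. destruct (Z_le_gt_dec x 0); nia. }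
        exists dj, (i - dj), (0, 1), (x, y - 1). cbn [fst snd].
        split; [lia|]. split; [lia|]. split; [lia|]. split; [split; nia|].
        f_equal; ring.
    + destruct Hm as [Hm Hx].
      destruct (Z_le_gt_dec i dj).
      * exfalso; apply Hnot. exists (y + x*a, x). split.
        -- exists i. split; [lia|]. left. simpl. split; [nia|lia].
        -- simpl. f_equal. ring.
      * destruct (Z.eq_dec x 1) as [->|Hx1].
        { exists y. split; [reflexivity|]. split; nia. }
        exfalso. apply Hred.
        exists r, (i - r), (1, -a), (x - 1, y + a). cbn [fst snd].
        split; [lia|]. split; [lia|]. split; [split; nia|]. split; [split; nia|].
        f_equal; ring.
  - intros [HB [y0 [Hc Hy]]]. subst c. split; [exact HB|]. split.
    + right. split.
      * exists (1 * dk + y0 * dj). cbn [fst snd]. split; [nia|]. split; lia.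
      * intros [j [k [[x1 y1] [[x2 y2] [_ [_ [[_ H1] [[_ H2] He]]]]]]]].
        simpl in *. injection He. lia.
    + intros [[x' y'] [[j [Hjr Hor]] Hf]]. simpl in *.
      injection Hf as e1 e2.
      assert (Hidx : x' * dj + y' * r = j) by (destruct Hor as [[H _]|[H _]]; exact H).
      subst y'. nia.
Qed.
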